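(* Let $Z$ be a weakly efficient solution of the SDP relaxation described in the context, with first-row data $(z_+,z_-,\rho)$. If $\rho=1$, then $(z_+,z_-,1)$ is feasible and weakly efficient for the QCQP.
   Context: Let $k,m,n\in\mathbb{N}$. Let $A_c,A_\delta\in\mathbb{R}^{m\times n}$ with $A_\delta\ge 0$ entrywise, $b_c,b_\delta\in\mathbb{R}^m$ with $b_\delta\ge0$, $G\in\mathbb{R}^{k\times n}$, and $\ell,u\in\mathbb{R}^n$ with $\ell\le u$. All vector inequalities are componentwise. QCQP: variables $x_+,x_-\in\mathbb{R}^n_{\ge0}$, $r\in[0,1]$, subject to $A_cx_+-A_cx_-+rA_\delta x_++rA_\delta x_-+rb_\delta-b_c\le0$ and $\ell\le x_+-x_-\le u$; vector objective $F(x_+,x_-,r)=(G(x_+-x_-),-r)\in\mathbb{R}^{k+1}$, minimized in the Pareto sense. SDP relaxation: variable a symmetric positive semidefinite matrix $Z$ of size $(2n+2)\times(2n+2)$ written in block form with row/column blocks of sizes $1,n,n,1$: $Z=\begin{pmatrix} Z_{00} & z_+^T & z_-^T & \rho\\ z_+ & * & * & w_+\\ z_- & * & * & w_-\\ \rho & w_+^T & w_-^T & \sigma\end{pmatrix}$, with $z_\pm,w_\pm\in\mathbb{R}^n$, $\rho,\sigma\in\mathbb{R}$. Constraints: $Z_{00}=1$; $A_cz_+-A_cz_-+A_\delta(w_++w_-)+\rho\, b_\delta-b_c\le0$; $\ell\le z_+-z_-\le u$; $z_+,z_-\ge0$, $\rho\ge0$, $w_+,w_-\ge0$; $\sigma\le1$.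 Vector objective $(G(z_+-z_-),-\rho)\in\mathbb{R}^{k+1}$, minimized in the Pareto sense. Efficiency (for minimizing a vector function $f$ over a feasible set $\mathcal{X}$): $x^*\in\mathcal{X}$ is efficient if there is no $x\in\mathcal{X}$ with $f(x)\le f(x^* )$ and $f(x)\ne f(x^* )$; weakly efficient if there is no $x\in\mathcal{X}$ with $f(x)<f(x^* )$ (all components strict). *)

(* Defs.v *)
From HB Require Import structures.
From mathcomp Require Import all_boot all_order all_algebra.
Set Implicit Arguments. Unset Strict Implicit. Unset Printing Implicit Defensive.
Import Order.TTheory GRing.Theory Num.Theory.
Local Open Scope ring_scope.

Section Defs.
Variable R : realFieldType.

Definition mle (p q : nat) (u v : 'M[R]_(p, q)) : Prop :=
  forall i j, u i j <= v i j.

Definition weakly_efficient (X : Type) (p : nat) (feas : X -> Prop)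
  (f : X -> 'cV[R]_p) (x : X) : Prop :=
  feas x /\ ~ (exists y, feas y /\ forall i, f y i 0 < f x i 0).

Definition qcqp_feasible (m n : nat) (Ac Ad : 'M[R]_(m, n)) (bc bd : 'cV[R]_m)
  (l u : 'cV[R]_n) (v : 'cV[R]_n * 'cV[R]_n * R) : Prop :=
  let: (xp, xm, r) := v in
  mle 0 xp /\ mle 0 xm /\ 0 <= r /\ r <= 1 /\
  mle (Ac *m xp - Ac *m xm + r *: (Ad *m xp) + r *: (Ad *m xm) + r *: bd - bc) 0 /\
  mle l (xp - xm) /\ mle (xp - xm) u.

Definition qcqp_obj (k n : nat) (G : 'M[R]_(k, n))
  (v : 'cV[R]_n * 'cV[R]_n * R) : 'cV[R]_(k + 1) :=
  let: (xp, xm, r) := v in col_mx (G *m (xp - xm)) (- r)%:M.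

(* ---------------- SDP relaxation ----------------
   Z has size (2n+2) x (2n+2); blocks of sizes 1, n, n, 1. *)
Definition idx0 (n : nat) : 'I_(n.*2.+2) := ord0.
Definition idxP (n : nat) (i : 'I_n) : 'I_(n.*2.+2) := inord i.+1.
Definition idxM (n : nat) (i : 'I_n) : 'I_(n.*2.+2) := inord (n + i).+1.
Definition idxL (n : nat) : 'I_(n.*2.+2) := ord_max.

Definition sdp_zp n (Z : 'M[R]_(n.*2.+2)) : 'cV[R]_n := \col_i Z (idxP i) (idx0 n).
Definition sdp_zm n (Z : 'M[R]_(n.*2.+2)) : 'cV[R]_n := \col_i Z (idxM i) (idx0 n).
Definition sdp_wp n (Z : 'M[R]_(n.*2.+2)) : 'cV[R]_n := \col_i Z (idxP i) (idxL n).
Definition sdp_wm n (Z : 'M[R]_(n.*2.+2)) : 'cV[R]_n := \col_i Z (idxM i) (idxL n).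
Definition sdp_rho n (Z : 'M[R]_(n.*2.+2)) : R := Z (idx0 n) (idxL n).
Definition sdp_sigma n (Z : 'M[R]_(n.*2.+2)) : R := Z (idxL n) (idxL n).

Definition psd (p : nat) (Z : 'M[R]_p) : Prop :=
  Z^T = Z /\ forall x : 'cV[R]_p, 0 <= (x^T *m Z *m x) 0 0.

Definition sdp_feasible (m n : nat) (Ac Ad : 'M[R]_(m, n)) (bc bd : 'cV[R]_m)
  (l u : 'cV[R]_n) (Z : 'M[R]_(n.*2.+2)) : Prop :=
  psd Z /\ Z (idx0 n) (idx0 n) = 1 /\
  mle (Ac *m sdp_zp Z - Ac *m sdp_zm Z + Ad *m (sdp_wp Z + sdp_wm Z)
       + sdp_rho Z *: bd - bc) 0 /\
  mle l (sdp_zp Z - sdp_zm Z) /\ mle (sdp_zp Z - sdp_zm Z) u /\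
  mle 0 (sdp_zp Z) /\ mle 0 (sdp_zm Z) /\ 0 <= sdp_rho Z /\
  mle 0 (sdp_wp Z) /\ mle 0 (sdp_wm Z) /\ sdp_sigma Z <= 1.

Definition sdp_obj (k n : nat) (G : 'M[R]_(k, n)) (Z : 'M[R]_(n.*2.+2))
  : 'cV[R]_(k + 1) :=
  col_mx (G *m (sdp_zp Z - sdp_zm Z)) (- sdp_rho Z)%:M.

End Defs.

(* Main.v *)
Require Import Defs.
From HB Require Import structures.
From mathcomp Require Import all_boot all_order all_algebra.
From mathcomp Require Import ring lra.
Import Order.TTheory GRing.Theory Num.Theory.
Local Open Scope ring_scope.

Section Aux.
Variable R : realFieldType.
Variable p : nat.
Variable Z : 'M[R]_p.

Definition bil (x y : 'cV[R]_p) : R := (x^T *m Z *m y) 0 0.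

Lemma bilDl x y z : bil (x + y) z = bil x z + bil y z.
Proof. by rewrite /bil linearD /= !mulmxDl mxE. Qed.
Lemma bilDr x y z : bil x (y + z) = bil x y + bil x z.
Proof. by rewrite /bil mulmxDr mxE. Qed.
Lemma bilZl a x y : bil (a *: x) y = a * bil x y.
Proof. by rewrite /bil linearZ /= -!scalemxAl mxE. Qed.
Lemma bilZr a x y : bil x (a *: y) = a * bil x y.
Proof. by rewrite /bil -scalemxAr mxE. Qed.
Lemma bilE (i j : 'I_p) : bil (delta_mx i 0) (delta_mx j 0) = Z i j.
Proof. by rewrite /bil trmx_delta -rowE -colE !mxE. Qed.
End Aux.
Arguments bil {R p} Z x y.

Lemma quad0 (R : realFieldType) (A c : R) : 0 <= c ->
  (forall t, 0 <= t * (A + A) + t * t * c) -> A = 0.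
Proof.
move=> Hc Qt.
have hd : 0 < c + 1 by lra.
have := Qt (- A / (c + 1)).
have -> : - A / (c + 1) * (A + A) + - A / (c + 1) * (- A / (c + 1)) * c
  = - (A * A) * (c + 2) / ((c+1) * (c+1)).
  by field; rewrite gt_eqF.
move=> H.
have H2 : 0 <= - (A * A) * (c + 2).
  have hd2 : 0 < (c+1)*(c+1) by apply: mulr_gt0.
  have := mulr_ge0 H (ltW hd2).
  by rewrite divfK ?gt_eqF.
have : A * A = 0 by nra.
by move/eqP; rewrite mulf_eq0 orbb => /eqP.
Qed.

Lemma psd_col (R : realFieldType) p (Z : 'M[R]_p) (a b i : 'I_p) :
  psd Z -> Z a a = 1 -> Z a b = 1 -> Z b b <= 1 -> Z i a = Z i b.
Proof.
move=> [sym pos] Haa Hab Hbb.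
have S : forall x y, Z x y = Z y x.
  by move=> x y; rewrite -{1}sym mxE.
set e := fun q : 'I_p => (delta_mx q 0 : 'cV[R]_p).
have Q : forall t : R, 0 <= bil Z (e a + (-1) *: e b + t *: e i) (e a + (-1) *: e b + t *: e i).
  by move=> t; apply: pos.
have Qt : forall t : R, 0 <= Z a a - Z a b - Z b a + Z b b + t * (Z a i - Z b i + Z i a - Z i b) + t * t * Z i i.
  move=> t; have := Q t.
  rewrite !(bilDl, bilDr, bilZl, bilZr) !bilE.
  by congr (_ <= _); ring.
have Hba : Z b a = 1 by rewrite S.
have Hbb1 : Z b b = 1.
  by have := Qt 0; rewrite Hab Hba Haa; lra.
have Hc : 0 <= Z i i by have := pos (e i); rewrite -/(bil Z _ _) bilE.
rewrite (S a i) (S b i) Haa Hab Hba Hbb1 in Qt.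
apply/eqP; rewrite -subr_eq0; apply/eqP; apply: (@quad0 R _ (Z i i) Hc) => t.
by have := Qt t; congr (_ <= _); ring.
Qed.

Theorem mainTheorem4 (R : realFieldType) (k m n : nat)
  (Ac Ad : 'M[R]_(m, n)) (bc bd : 'cV[R]_m) (G : 'M[R]_(k, n))
  (l u : 'cV[R]_n) (Z : 'M[R]_(n.*2.+2)) :
  (forall i j, 0 <= Ad i j) -> mle 0 bd -> mle l u ->
  weakly_efficient (sdp_feasible Ac Ad bc bd l u) (sdp_obj G) Z ->
  sdp_rho Z = 1 ->
  weakly_efficient (qcqp_feasible Ac Ad bc bd l u) (qcqp_obj G)
    (sdp_zp Z, sdp_zm Z, 1).
Proof.
move=> _ _ _ [[psdZ [H00 [Hc [Hl [Hu [Hp [Hm [_ [_ [_ Hsig]]]]]]]]]] _] Hrho.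
split; last first.
  move=> [[[xp xm] r] [Hf Hlt]]; case: Hf => _ [_ [_ [Hr _]]].
  have := Hlt (rshift k ord0).
  rewrite /qcqp_obj !col_mxEd !mxE /=; lra.
have Ew : forall i, Z i (idxL n) = Z i (idx0 n).
  by move=> i; symmetry; apply: psd_col.
have Ewp : sdp_wp Z = sdp_zp Z by apply/matrixP=> i j; rewrite !mxE; exact: Ew.
have Ewm : sdp_wm Z = sdp_zm Z by apply/matrixP=> i j; rewrite !mxE; exact: Ew.
rewrite /qcqp_feasible; split; first by [].
split; first by [].
split; first lra.
split; first lra.
split; last by split.
rewrite Ewp Ewm Hrho mulmxDr !scale1r in Hc.
by rewrite !scale1r; rewrite !addrA in Hc.
Qed.
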